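(* Assume problem (P$_{\mathrm{fin}}$) has an optimal solution. Then there exist an optimal solution $\{p_{k,i},\delta_{k,i}\}$ of (P$_{\mathrm{fin}}$) and nonnegative numbers $\gamma_{k,i},\epsilon_{k,i}$ with $\delta_{k,i}=\gamma_{k,i}+\epsilon_{k,i}$ such that $\{p_{k,i},\gamma_{k,i},\epsilon_{k,i}\}$ is a partially procrastinating policy.
   Context: Two-way channel with finite batteries. There are two nodes $T_1,T_2$, $N$ unit-length slots, channel gains $h_1,h_2>0$, noise powers $\sigma_1^2,\sigma_2^2>0$, efficiencies $\alpha_1,\alpha_2\in[0,1]$, harvested energies $E_{k,i}\ge0$, and battery capacities $E_k^{\max}\in(0,\infty)$. A power policy is $\{p_{k,i},\delta_{k,i}\}$. Here $p_{k,i}\ge0$ is the transmit power of $T_k$ in slot $i$, and $\delta_{k,i}\ge0$ is the energy sent from $T_k$ to $T_j$ ($j\neq k$), of which $\alpha_k\delta_{k,i}$ is received. The battery state is $$S_{k,i}=\sum_{n=1}^i(E_{k,n}-p_{k,n}+\alpha_j\delta_{j,n}-\delta_{k,n}).$$ Let $$C(p_1,p_2)=\tfrac12\log(1+h_1p_1/\sigma_2^2)+\tfrac12\log(1+h_2p_2/\sigma_1^2).$$ Problem (P$_{\mathrm{fin}}$) is to maximize $\sum_{i=1}^N C(p_{1,i},p_{2,i})$ subject to $0\le S_{k,i}\le E_k^{\max}$, $p_{k,i}\ge0$ and $\delta_{k,i}\ge0$ for all $k=1,2$ and $i=1,\dots,N$. A policy $\{p_{k,i},\gamma_{k,i},\epsilon_{k,i}\}$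 with $\gamma_{k,i},\epsilon_{k,i}\ge0$, with transfers $\delta_{k,i}=\gamma_{k,i}+\epsilon_{k,i}$ and $S_{k,i}$ computed from these $\delta_{k,i}$, is called partially procrastinating if for all $k,j\in\{1,2\}$, $j\ne k$, and $i=1,\dots,N$: - $p_{k,i}-\alpha_j\gamma_{j,i}\ge0$; - $\gamma_{1,i}\gamma_{2,i}=0$; - $\epsilon_{k,i}(E_k^{\max}-S_{k,i})=0$. *)

(* Defs.v *)
From Stdlib Require Import Reals.
Open Scope R_scope.

Inductive node : Type := T1 | T2.

Definition other (k : node) : node := match k with T1 => T2 | T2 => T1 end.

Fixpoint sum1 (f : nat -> R) (i : nat) : R :=
  match i with
  | O => 0
  | S i' => sum1 f i' + f (S i')
  end.

Definition battery (alpha : node -> R) (E p delta : node -> nat -> R)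
  (k : node) (i : nat) : R :=
  sum1 (fun n => E k n - p k n + alpha (other k) * delta (other k) n - delta k n) i.

(* Per-slot sum rate C(p1,p2); h_k is the gain of T_k's link, sigma2 k = sigma_k^2. *)
Definition Crate (h sigma2 : node -> R) (p1 p2 : R) : R :=
  / 2 * ln (1 + h T1 * p1 / sigma2 T2) + / 2 * ln (1 + h T2 * p2 / sigma2 T1).

Definition objective (N : nat) (h sigma2 : node -> R) (p : node -> nat -> R) : R :=
  sum1 (fun i => Crate h sigma2 (p T1 i) (p T2 i)) N.

Definition feasible (N : nat) (alpha Emax : node -> R) (E p delta : node -> nat -> R) : Prop :=
  forall k i, (1 <= i <= N)%nat ->
    0 <= battery alpha E p delta k i /\ battery alpha E p delta k i <= Emax k /\
    0 <= p k i /\ 0 <= delta k i.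

Definition optimal (N : nat) (h sigma2 alpha Emax : node -> R) (E p delta : node -> nat -> R) : Prop :=
  feasible N alpha Emax E p delta /\
  forall p' delta', feasible N alpha Emax E p' delta' ->
    objective N h sigma2 p' <= objective N h sigma2 p.

Definition partially_procrastinating (N : nat) (alpha Emax : node -> R)
  (E p gamma eps : node -> nat -> R) : Prop :=
  forall k i, (1 <= i <= N)%nat ->
    p k i - alpha (other k) * gamma (other k) i >= 0 /\
    gamma T1 i * gamma T2 i = 0 /\
    eps k i * (Emax k - battery alpha E p (fun k' n => gamma k' n + eps k' n) k i) = 0.

(* Main.v *)
Require Import Defs.
From Stdlib Require Import Reals Lra Psatz.
Open Scope R_scope.

Definition cap (a beta c : R) : R :=
  if Req_EM_T a 0 then c else Rmin c (beta / a).

Lemma cap_spec a beta c : 0 <= a -> 0 <= beta -> 0 <= c ->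
  0 <= cap a beta c /\ cap a beta c <= c /\ a * cap a beta c <= beta /\
  (cap a beta c = c \/ (0 < a /\ a * cap a beta c = beta)) /\
  (forall x, x <= c -> a * x <= beta -> x <= cap a beta c).
Proof.
  intros Ha Hb Hc. unfold cap. destruct (Req_EM_T a 0) as [H0|H0].
  - subst. repeat split; try lra. intros; lra.
  - assert (Hp : 0 < a) by lra.
    assert (Hq : a * (beta / a) = beta) by (field; lra).
    assert (Hq0 : 0 <= beta / a) by (unfold Rdiv; apply Rmult_le_pos; [lra| left; apply Rinv_0_lt_compat; lra]).
    unfold Rmin. destruct (Rle_dec c (beta / a)) as [Hl|Hl].
    + repeat split; try lra. nra. intros; lra.
    + repeat split; try lra. intros x Hx Hax.
      destruct (Rle_dec x (beta/a)); [lra|]. nra.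
Qed.

Definition solve (a b M1 M2 S1 S2 d1 d2 : R) : R * R :=
  let c1 := Rmin d1 (M1 - S1 + b * d2) in
  let c2 := cap a (S2 + d2) c1 in
  let u1 := cap (1 - a * b) (M1 - S1 + b * (M2 - S2)) c2 in
  let c3 := Rmin d2 (M2 - S2 + a * u1) in
  let u2 := cap b (S1 + u1) c3 in
  (u1, u2).

Definition good (a b M1 M2 S1 S2 d1 d2 u1 u2 : R) : Prop :=
  let F1 := S1 + u1 - b * u2 in
  let F2 := S2 + u2 - a * u1 in
  0 <= u1 <= d1 /\ 0 <= u2 <= d2 /\ 0 <= F1 <= M1 /\ 0 <= F2 <= M2 /\
  (u1 < d1 -> F1 = M1 \/ F2 = 0) /\
  (u2 < d2 -> F2 = M2 \/ F1 = 0) /\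
  ~ (u1 < d1 /\ u2 < d2 /\ F1 < M1 /\ F2 < M2).

Lemma solve_spec a b M1 M2 S1 S2 d1 d2 :
  0 <= a <= 1 -> 0 <= b <= 1 -> 0 < M1 -> 0 < M2 ->
  0 <= S1 <= M1 -> 0 <= S2 <= M2 -> 0 <= d1 -> 0 <= d2 ->
  good a b M1 M2 S1 S2 d1 d2 (fst (solve a b M1 M2 S1 S2 d1 d2))
    (snd (solve a b M1 M2 S1 S2 d1 d2)).
Proof.
  intros Ha Hb HM1 HM2 HS1 HS2 Hd1 Hd2.
  unfold solve; simpl.
  set (c1 := Rmin d1 (M1 - S1 + b * d2)).
  assert (Hab : 0 <= a * b <= 1) by nra.
  assert (Hc1 : 0 <= c1 /\ c1 <= d1 /\ c1 <= M1 - S1 + b * d2).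
  { unfold c1; split; [apply Rmin_glb; nra| split; [apply Rmin_l|apply Rmin_r]]. }
  set (c2 := cap a (S2 + d2) c1).
  destruct (cap_spec a (S2 + d2) c1) as [C2a [C2b [C2c [_ C2e]]]]; try lra.
  fold c2 in C2a, C2b, C2c, C2e.
  set (u1 := cap (1 - a * b) (M1 - S1 + b * (M2 - S2)) c2).
  destruct (cap_spec (1 - a * b) (M1 - S1 + b * (M2 - S2)) c2) as [U1a [U1b [U1c [_ U1e]]]]; try nra.
  fold u1 in U1a, U1b, U1c, U1e.
  set (c3 := Rmin d2 (M2 - S2 + a * u1)).
  assert (Hc3 : 0 <= c3 /\ c3 <= d2 /\ c3 <= M2 - S2 + a * u1 /\
                (c3 = d2 \/ c3 = M2 - S2 + a * u1)).
  { unfold c3; split; [apply Rmin_glb; nra| split; [apply Rmin_l|split;[apply Rmin_r|]]].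
    unfold Rmin; destruct (Rle_dec _ _); auto. }
  set (u2 := cap b (S1 + u1) c3).
  destruct (cap_spec b (S1 + u1) c3) as [U2a [U2b [U2c [U2d U2e]]]]; try nra.
  fold u2 in U2a, U2b, U2c, U2d, U2e.
  assert (Hau1 : a * u1 <= S2 + d2) by nra.
  assert (Max1 : forall x y, 0 <= x <= d1 -> 0 <= y <= d2 ->
             0 <= S1 + x - b * y <= M1 -> 0 <= S2 + y - a * x <= M2 -> x <= u1).
  { intros x y Hx Hy HF1 HF2. apply U1e.
    - apply C2e.
      + unfold c1; apply Rmin_glb; nra.
      + nra.
    - nra. }
  assert (Max2 : forall y, 0 <= y <= d2 ->
             0 <= S1 + u1 - b * y -> S2 + y - a * u1 <= M2 -> y <= u2).
  { intros y Hy H1 H2. apply U2e.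
    - unfold c3; apply Rmin_glb; lra.
    - lra. }
  assert (F1up : S1 + u1 - b * u2 <= M1).
  { destruct U2d as [E|[Hbp E]].
    - rewrite E. destruct Hc3 as [_ [_ [_ [E3|E3]]]]; rewrite E3; nra.
    - lra. }
  assert (F2lo : 0 <= S2 + u2 - a * u1).
  { destruct U2d as [E|[Hbp E]].
    - rewrite E. destruct Hc3 as [_ [_ [_ [E3|E3]]]]; rewrite E3; nra.
    - nra. }
  unfold good.
  split; [lra|]. split; [lra|]. split; [lra|]. split; [lra|].
  split; [|split].
  - intros Hlt.
    destruct (Req_dec (S1 + u1 - b * u2) M1) as [E1|E1]; [left; exact E1|].
    destruct (Req_dec (S2 + u2 - a * u1) 0) as [E2|E2]; [right; exact E2|].
    exfalso.
    set (e := Rmin (Rmin (d1 - u1) (M1 - (S1 + u1 - b * u2))) (S2 + u2 - a * u1)).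
    assert (He : 0 < e) by (unfold e; repeat apply Rmin_glb_lt; lra).
    assert (He1 : e <= d1 - u1) by (unfold e; eapply Rle_trans; [apply Rmin_l|apply Rmin_l]).
    assert (He2 : e <= M1 - (S1 + u1 - b * u2)) by (unfold e; eapply Rle_trans; [apply Rmin_l|apply Rmin_r]).
    assert (He3 : e <= S2 + u2 - a * u1) by (unfold e; apply Rmin_r).
    assert (u1 + e <= u1); [|lra].
    apply (Max1 (u1 + e) u2); try lra; nra.
  - intros Hlt.
    destruct (Req_dec (S2 + u2 - a * u1) M2) as [E1|E1]; [left; exact E1|].
    destruct (Req_dec (S1 + u1 - b * u2) 0) as [E2|E2]; [right; exact E2|].
    exfalso.
    set (e := Rmin (Rmin (d2 - u2) (M2 - (S2 + u2 - a * u1))) (S1 + u1 - b * u2)).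
    assert (He : 0 < e) by (unfold e; repeat apply Rmin_glb_lt; lra).
    assert (He1 : e <= d2 - u2) by (unfold e; eapply Rle_trans; [apply Rmin_l|apply Rmin_l]).
    assert (He2 : e <= M2 - (S2 + u2 - a * u1)) by (unfold e; eapply Rle_trans; [apply Rmin_l|apply Rmin_r]).
    assert (He3 : e <= S1 + u1 - b * u2) by (unfold e; apply Rmin_r).
    assert (u2 + e <= u2); [|lra].
    apply Max2; try lra; nra.
  - intros [H1 [H2 [H3 H4]]].
    set (e := Rmin (Rmin (d1 - u1) (d2 - u2))
                   (Rmin (M1 - (S1 + u1 - b * u2)) (M2 - (S2 + u2 - a * u1)))).
    assert (He : 0 < e) by (unfold e; repeat apply Rmin_glb_lt; lra).
    assert (He1 : e <= d1 - u1) by (unfold e; eapply Rle_trans; [apply Rmin_l|apply Rmin_l]).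
    assert (He2 : e <= d2 - u2) by (unfold e; eapply Rle_trans; [apply Rmin_l|apply Rmin_r]).
    assert (He3 : e <= M1 - (S1 + u1 - b * u2)) by (unfold e; eapply Rle_trans; [apply Rmin_r|apply Rmin_l]).
    assert (He4 : e <= M2 - (S2 + u2 - a * u1)) by (unfold e; eapply Rle_trans; [apply Rmin_r|apply Rmin_r]).
    assert (u1 + e <= u1); [|lra].
    apply (Max1 (u1 + e) (u2 + e)); try lra; nra.
Qed.

Section Constr.
Variables (N : nat) (alpha Emax : node -> R) (E p delta : node -> nat -> R).

Definition Sb k i := battery alpha E p delta k i.

Fixpoint Dbt (i : nat) : R * R :=
  match i with
  | O => (0, 0)
  | S j => let x := Dbt j in
      solve (alpha T1) (alpha T2) (Emax T1) (Emax T2) (Sb T1 (S j)) (Sb T2 (S j))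
        (fst x + delta T1 (S j)) (snd x + delta T2 (S j))
  end.

Definition uu k i := match k with T1 => fst (Dbt i) | T2 => snd (Dbt i) end.
Definition tt k i := uu k (pred i) + delta k i - uu k i.
Definition FF k i := Sb k i + uu k i - alpha (other k) * uu (other k) i.
Definition gam k i := if Req_EM_T (FF k i) (Emax k) then 0 else tt k i.
Definition eps k i := if Req_EM_T (FF k i) (Emax k) then tt k i else 0.
Definition dnew k i := gam k i + eps k i.

Lemma dnew_tt k i : dnew k i = tt k i.
Proof. unfold dnew, gam, eps; destruct (Req_EM_T _ _); ring. Qed.

Lemma bat_new k i : battery alpha E p dnew k i = FF k i.
Proof.
  induction i as [|i IH].
  - unfold FF, Sb, battery; simpl. destruct k; simpl; ring.
  - unfold battery in *; simpl sum1. rewrite IH. rewrite !dnew_tt.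
    unfold FF, Sb, tt, battery. simpl sum1. simpl pred.
    destruct k; simpl; ring.
Qed.

Hypothesis alpha_rng : forall k, 0 <= alpha k <= 1.
Hypothesis Emax_pos : forall k, 0 < Emax k.
Hypothesis Epos : forall k i, 0 <= E k i.
Hypothesis feas : feasible N alpha Emax E p delta.

Lemma good_at j : (S j <= N)%nat -> 0 <= uu T1 j -> 0 <= uu T2 j ->
  good (alpha T1) (alpha T2) (Emax T1) (Emax T2) (Sb T1 (S j)) (Sb T2 (S j))
    (uu T1 j + delta T1 (S j)) (uu T2 j + delta T2 (S j)) (uu T1 (S j)) (uu T2 (S j)).
Proof.
  intros HN H1 H2.
  destruct (feas T1 (S j)) as [A1 [A2 [A3 A4]]]; [lia|].
  destruct (feas T2 (S j)) as [B1 [B2 [B3 B4]]]; [lia|].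
  unfold uu at 3 4; simpl Dbt.
  unfold uu in H1, H2.
  apply solve_spec; auto; unfold Sb; try lra.
Qed.

Lemma u_nonneg i : (i <= N)%nat -> 0 <= uu T1 i /\ 0 <= uu T2 i.
Proof.
  induction i as [|i IH]; intros HN.
  - simpl; lra.
  - destruct IH as [H1 H2]; [lia|].
    destruct (good_at i HN H1 H2) as [G1 [G2 _]]. lra.
Qed.

Lemma FF_step k j : FF k (S j) = FF k j + E k (S j) - p k (S j)
   + alpha (other k) * tt (other k) (S j) - tt k (S j).
Proof.
  rewrite <- !bat_new. unfold battery at 1. simpl sum1. fold (battery alpha E p dnew k j).
  rewrite !dnew_tt. ring.
Qed.

Lemma F_box k i : (i <= N)%nat -> 0 <= FF k i <= Emax k.
Proof.
  intros HN. destruct i as [|j].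
  - unfold FF, Sb, battery; simpl. pose proof (Emax_pos T1); pose proof (Emax_pos T2); destruct k; simpl; lra.
  - destruct (u_nonneg j) as [H1 H2]; [lia|].
    destruct (good_at j HN H1 H2) as [G1 [G2 [G3 [G4 _]]]].
    destruct k; unfold FF; simpl other; lra.
Qed.

Lemma slot_facts i : (1 <= i <= N)%nat ->
  0 <= tt T1 i /\ 0 <= tt T2 i /\
  (p T2 i - alpha T1 * gam T1 i >= 0) /\ (p T1 i - alpha T2 * gam T2 i >= 0) /\
  gam T1 i * gam T2 i = 0.
Proof.
  intros [Hi HN]. destruct i as [|j]; [lia|].
  destruct (u_nonneg j) as [H1 H2]; [lia|].
  destruct (good_at j HN H1 H2) as [G1 [G2 [G3 [G4 [G5 [G6 G7]]]]]].
  destruct (F_box T1 j) as [P1 _]; [lia|].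
  destruct (F_box T2 j) as [P2 _]; [lia|].
  destruct (feas T1 (S j)) as [A1 [A2 [A3 A4]]]; [lia|].
  destruct (feas T2 (S j)) as [B1 [B2 [B3 B4]]]; [lia|].
  pose proof (FF_step T1 j) as S1. pose proof (FF_step T2 j) as S2.
  simpl other in S1, S2.
  pose proof (Emax_pos T1). pose proof (Emax_pos T2).
  pose proof (alpha_rng T1). pose proof (alpha_rng T2).
  pose proof (Epos T1 (S j)). pose proof (Epos T2 (S j)).
  assert (EF1 : FF T1 (S j) = Sb T1 (S j) + uu T1 (S j) - alpha T2 * uu T2 (S j)) by reflexivity.
  assert (EF2 : FF T2 (S j) = Sb T2 (S j) + uu T2 (S j) - alpha T1 * uu T1 (S j)) by reflexivity.
  assert (Et1 : tt T1 (S j) = uu T1 j + delta T1 (S j) - uu T1 (S j)) by reflexivity.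
  assert (Et2 : tt T2 (S j) = uu T2 j + delta T2 (S j) - uu T2 (S j)) by reflexivity.
  split; [lra|]. split; [lra|].
  unfold gam.
  destruct (Req_EM_T (FF T1 (S j)) (Emax T1)) as [Q1|Q1];
  destruct (Req_EM_T (FF T2 (S j)) (Emax T2)) as [Q2|Q2].
  - split; [lra|]. split; [lra|]. ring.
  - split; [lra|]. split; [|ring].
    destruct (Rle_lt_dec (tt T2 (S j)) 0); [nra|].
    assert (HF: FF T1 (S j) = 0).
    { destruct G6 as [X|X]; [lra| |]; [lra|lra]. }
    destruct (Rle_lt_dec (tt T1 (S j)) 0) as [X|X].
    + assert (tt T1 (S j) = 0) by lra. nra.
    + exfalso. apply G7. lra.
  - split; [|split; [lra|ring]].
    destruct (Rle_lt_dec (tt T1 (S j)) 0); [nra|].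
    assert (HF: FF T2 (S j) = 0).
    { destruct G5 as [X|X]; [lra| |]; [lra|lra]. }
    destruct (Rle_lt_dec (tt T2 (S j)) 0) as [X|X].
    + assert (tt T2 (S j) = 0) by lra. nra.
    + exfalso. apply G7. lra.
  - destruct (Rle_lt_dec (tt T1 (S j)) 0) as [X1|X1].
    + assert (tt T1 (S j) = 0) by lra. rewrite H7.
      destruct (Rle_lt_dec (tt T2 (S j)) 0) as [X2|X2].
      * assert (tt T2 (S j) = 0) by lra. rewrite H8. split; [lra|split;[lra|ring]].
      * assert (HF: FF T1 (S j) = 0).
        { destruct G6 as [X|X]; [lra| |]; [lra|lra]. }
        split; [lra|]. split; [|ring]. nra.
    + destruct (Rle_lt_dec (tt T2 (S j)) 0) as [X2|X2].
      * assert (tt T2 (S j) = 0) by lra. rewrite H7.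
        assert (HF: FF T2 (S j) = 0).
        { destruct G5 as [X|X]; [lra| |]; [lra|lra]. }
        split; [nra|]. split; [lra|ring].
      * exfalso. apply G7. lra.
Qed.
End Constr.

Theorem lemma4 (N : nat) (h sigma2 alpha Emax : node -> R) (E : node -> nat -> R)
  (hpos : forall k, 0 < h k)
  (spos : forall k, 0 < sigma2 k)
  (alpha_rng : forall k, 0 <= alpha k <= 1)
  (Epos : forall k i, 0 <= E k i)
  (Emax_pos : forall k, 0 < Emax k)
  (hopt : exists p delta, optimal N h sigma2 alpha Emax E p delta) :
  exists p delta gamma eps : node -> nat -> R,
    optimal N h sigma2 alpha Emax E p delta /\
    (forall k i, (1 <= i <= N)%nat ->
       0 <= gamma k i /\ 0 <= eps k i /\ delta k i = gamma k i + eps k i) /\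
    partially_procrastinating N alpha Emax E p gamma eps.
Proof.
  destruct hopt as [p [delta [Hfeas Hopt]]].
  exists p, (dnew alpha Emax E p delta), (gam alpha Emax E p delta), (eps alpha Emax E p delta).
  assert (Htt : forall k i, (1 <= i <= N)%nat -> 0 <= tt alpha Emax E p delta k i).
  { intros k i Hi. destruct (slot_facts N alpha Emax E p delta alpha_rng Emax_pos Epos Hfeas i Hi)
      as [X1 [X2 _]]. destruct k; assumption. }
  assert (Hge : forall k i, (1 <= i <= N)%nat ->
     0 <= gam alpha Emax E p delta k i /\ 0 <= eps alpha Emax E p delta k i).
  { intros k i Hi. specialize (Htt k i Hi). unfold gam, eps.
    destruct (Req_EM_T _ _); lra. }
  split; [split|split].
  - intros k i Hi. rewrite bat_new.
    destruct (F_box N alpha Emax E p delta alpha_rng Emax_pos Hfeas k i) as [Y1 Y2]; [lia|].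
    destruct (Hfeas k i Hi) as [_ [_ [Z _]]].
    rewrite dnew_tt. specialize (Htt k i Hi). lra.
  - intros p' d' Hf. exact (Hopt p' d' Hf).
  - intros k i Hi. destruct (Hge k i Hi). split; [assumption|split; [assumption|reflexivity]].
  - intros k i Hi.
    destruct (slot_facts N alpha Emax E p delta alpha_rng Emax_pos Epos Hfeas i Hi)
      as [_ [_ [W1 [W2 W3]]]].
    split; [destruct k; simpl other; assumption|]. split; [assumption|].
    change (fun k' n => gam alpha Emax E p delta k' n + eps alpha Emax E p delta k' n)
      with (dnew alpha Emax E p delta).
    rewrite bat_new. unfold eps.
    destruct (Req_EM_T _ _) as [Q|Q]; [rewrite Q; ring|ring].
Qed.
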